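(* There is a universal constant $C>0$ such that the following holds. Let $\delta\in(0,1]$, $k\geq 12/\delta^2$, $m\geq 4$, and let $T=(t_{ij})$ be an $m\times k$ real matrix. Then for any $y\in S^{k-1}$ there is a coordinate projection $P:\mathbb{R}^k\to\mathbb{R}^k$ with $\mathrm{rank}\,P\leq\delta k$ such that $$C^{-1}\delta^2\min_{\ell\leq m}|Ty|_\ell\leq\frac{\max_{i,j}|t_{ij}|}{\sqrt{k}}+\textstyle\max^{(\lfloor m/4\rfloor)}_{\ell\in[m]}|TP(y)|_\ell.$$
   Context: A coordinate projection is the orthogonal projection onto $\mathrm{span}\{e_j\}_{j\in J}$ for some subset $J$ of coordinates. For $v\in\mathbb{R}^m$, $|v|\in\mathbb{R}^m_+$ is the vector of absolute values of the coordinates, and $|v|_\ell$ its $\ell$-th coordinate. For a non-negative sequence $(a_\ell)_{\ell\in J}$ and $k\in\mathbb{N}$, $\max^{(k)}_{\ell\in J}a_\ell$ denotes its $k$-th largest element ($0$ if $k>|J|$). *)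

(* Defs.v *)
From HB Require Import structures.
From mathcomp Require Import all_boot all_order all_algebra.
From mathcomp Require Import reals.
Set Implicit Arguments. Unset Strict Implicit. Unset Printing Implicit Defensive.
Import Order.TTheory GRing.Theory Num.Theory.
Local Open Scope ring_scope.

Definition coordproj (R : ringType) (k : nat) (J : {set 'I_k}) (y : 'cV[R]_k) : 'cV[R]_k :=
  \col_j (if j \in J then y j 0 else 0).

Definition absv (R : numDomainType) (m : nat) (v : 'cV[R]_m) : 'cV[R]_m :=
  \col_l `|v l 0|.

(* kth_max r v = r-th largest coordinate of v (r >= 1), 0 if r > m. *)
Definition kth_max (R : realDomainType) (m : nat) (r : nat) (v : 'cV[R]_m) : R :=
  nth 0 (sort (fun a b : R => b <= a) [seq v l 0 | l <- enum 'I_m]) r.-1.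

(* minimum of the coordinates of v (meaningful when m >= 1). *)
Definition min_coord (R : realDomainType) (m : nat) (v : 'cV[R]_m) : R :=
  let s := [seq v l 0 | l <- enum 'I_m] in foldr Num.min (head 0 s) s.

Definition max_abs_entry (R : realDomainType) (m k : nat) (T : 'M[R]_(m, k)) : R :=
  \big[Num.max/0]_(i < m) \big[Num.max/0]_(j < k) `|T i j|.

Definition on_sphere (R : realDomainType) (k : nat) (y : 'cV[R]_k) : Prop :=
  \sum_(j < k) y j 0 ^+ 2 = 1.

(* Main.v *)
Require Import Defs.
From HB Require Import structures.
From mathcomp Require Import all_boot all_order all_algebra.
From mathcomp Require Import reals.
From mathcomp.algebra_tactics Require Import ring lra.
From Stdlib Require Import Classical.
From mathcomp Require Import zify.
Import Order.TTheory GRing.Theory Num.Theory.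
Local Open Scope ring_scope.
Section Prob.
Variable R : realType.
Variable p : R.

Fixpoint Ex (n : nat) (f : seq bool -> R) : R :=
  if n is n'.+1 then p * Ex n' (fun s => f (true :: s)) + (1 - p) * Ex n' (fun s => f (false :: s))
  else f [::].

Lemma Ex_ext n f g : (forall s, f s = g s) -> Ex n f = Ex n g.
Proof.
elim: n f g => [|n IH] f g H /=; first exact: H.
by congr (_ * _ + _ * _); apply: IH => s; exact: H.
Qed.

Lemma Ex_const n c : Ex n (fun _ => c) = c.
Proof. elim: n => [|n IH] //=; rewrite !IH; ring. Qed.

Lemma Ex_add n f g : Ex n (fun s => f s + g s) = Ex n f + Ex n g.
Proof.
elim: n f g => [|n IH] f g //=; rewrite !IH; ring.
Qed.

Lemma Ex_scale n k f : Ex n (fun s => k * f s) = k * Ex n f.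
Proof.
elim: n f => [|n IH] f //=; rewrite !IH; ring.
Qed.

Hypothesis p0 : 0 <= p.
Hypothesis p1 : p <= 1.

Lemma Ex_le n f g : (forall s, f s <= g s) -> Ex n f <= Ex n g.
Proof.
elim: n f g => [|n IH] f g H /=; first exact: H.
apply: lerD; apply: ler_wpM2l; rewrite ?subr_ge0 //; apply: IH => s; exact: H.
Qed.

Lemma Ex_sum n (I : Type) (r : seq I) (P : pred I) (F : I -> seq bool -> R) :
  Ex n (fun s => \sum_(i <- r | P i) F i s) = \sum_(i <- r | P i) Ex n (F i).
Proof.
elim: r => [|i r IH]; first by rewrite big_nil; transitivity (Ex n (fun _ => 0)); [apply: Ex_ext => s; rewrite big_nil | exact: Ex_const].
rewrite big_cons -IH.
rewrite (Ex_ext _ _ (fun s => if P i then F i s + \sum_(j <- r | P j) F j s else \sum_(j <- r | P j) F j s)); last by move=> s; rewrite big_cons.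
by case: (P i) => //=; rewrite Ex_add.
Qed.

Lemma Ex_exists n f c : c < Ex n f -> exists s, c < f s.
Proof.
move=> H; apply/not_all_not_ex => /= Hn.
have : Ex n f <= Ex n (fun _ => c).
  by apply: Ex_le => s; rewrite leNgt; apply/negP => /(Hn s).
by rewrite Ex_const leNgt H.
Qed.

Fixpoint Xv (c : seq R) (s : seq bool) : R :=
  match c, s with
  | x :: c', b :: s' => (if b then x else 0) + Xv c' s'
  | _, _ => 0
  end.

Definition vv := p * (1 - p).
Definition m3 := p * (1 - p) ^+ 3 - (1 - p) * p ^+ 3.
Definition m4 := p * (1 - p) ^+ 4 + (1 - p) * p ^+ 4.

Definition Sc (c : seq R) := \sum_(x <- c) x.
Definition Vc (c : seq R) := \sum_(x <- c) vv * x ^+ 2.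
Definition K3 (c : seq R) := \sum_(x <- c) m3 * x ^+ 3.
Definition Q4 (c : seq R) := \sum_(x <- c) (m4 - 3 * vv ^+ 2) * x ^+ 4.

Lemma Ex_M2 c nu :
  Ex (size c) (fun s => (nu + Xv c s) ^+ 2) = (nu + p * Sc c) ^+ 2 + Vc c.
Proof.
elim: c nu => [|x c IH] nu /=; first by rewrite /Sc /Vc !big_nil; ring.
rewrite (Ex_ext _ _ (fun s => ((nu + x) + Xv c s) ^+ 2)); last by move=> s /=; ring.
rewrite (Ex_ext (size c) (fun s => (nu + (0 + Xv c s)) ^+ 2) (fun s => (nu + Xv c s) ^+ 2)); last by move=> s; rewrite add0r.
rewrite !IH /Sc /Vc !big_cons /vv; ring.
Qed.

Lemma Ex_M4 c nu :
  Ex (size c) (fun s => (nu + Xv c s) ^+ 4) =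
  (nu + p * Sc c) ^+ 4 + 6 * (nu + p * Sc c) ^+ 2 * Vc c + 4 * (nu + p * Sc c) * K3 c
  + 3 * Vc c ^+ 2 + Q4 c.
Proof.
elim: c nu => [|x c IH] nu /=; first by rewrite /Sc /Vc /K3 /Q4 !big_nil; ring.
rewrite (Ex_ext _ _ (fun s => ((nu + x) + Xv c s) ^+ 4)); last by move=> s /=; ring.
rewrite (Ex_ext (size c) (fun s => (nu + (0 + Xv c s)) ^+ 4) (fun s => (nu + Xv c s) ^+ 4)); last by move=> s; rewrite add0r.
rewrite !IH /Sc /Vc /K3 /Q4 !big_cons /vv /m3 /m4; ring.
Qed.


Definition ind (b : bool) : R := if b then 1 else 0.

Lemma ind_ge0 b : 0 <= ind b. Proof. by case: b; rewrite /ind ?ler01. Qed.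
Lemma ind_le1 b : ind b <= 1. Proof. by case: b; rewrite /ind ?ler01. Qed.

Lemma Ex_affine n a b f : Ex n (fun s => a + b * f s) = a + b * Ex n f.
Proof. by rewrite Ex_add Ex_const Ex_scale. Qed.

Lemma Ex_ge0ind n f : 0 <= Ex n (fun s => ind (f s)).
Proof. rewrite -(Ex_const n 0); apply: Ex_le => s; exact: ind_ge0. Qed.

Lemma cheb_ind c nu t :
  t ^+ 2 * 4 <= (nu + p * Sc c) ^+ 2 -> 0 < (nu + p * Sc c) ^+ 2 ->
  1 - 4 / (nu + p * Sc c) ^+ 2 * Vc c
   <= Ex (size c) (fun s => ind (t ^+ 2 <= (nu + Xv c s) ^+ 2)).
Proof.
set mu := nu + p * Sc c => ht hmu.
set k := 4 / mu ^+ 2.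
have hk : k * mu ^+ 2 = 4 by rewrite /k mulrAC -mulrA divff ?mulr1 // gt_eqF.
have hk0 : 0 <= k by rewrite /k divr_ge0 // ltW.
have -> : 1 - k * Vc c = 1 + (- k) * Ex (size c) (fun s => ((nu - mu) + Xv c s) ^+ 2).
  by rewrite Ex_M2 /mu; congr (_ + _); rewrite -mulNr; congr (_ * _); ring.
rewrite -Ex_affine; apply: Ex_le => s.
rewrite /ind; set X := Xv c s; case: ifP => h.
  have : 0 <= k * (nu - mu + X) ^+ 2 by rewrite mulr_ge0 // sqr_ge0.
  lra.
move/negbT: h; rewrite -ltNge => h.
have h2 : mu ^+ 2 <= 4 * (nu + X - mu) ^+ 2.
  set u := nu + X in h *.
  have hu : 4 * u ^+ 2 < mu ^+ 2 by lra.
  suff : 0 <= (2 * u - mu) * (2 * u - 3 * mu) by nra.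
  have [hm|hm] := lerP 0 mu.
    have : 2 * u < mu by rewrite ltNge; apply/negP => hh; nra.
    nra.
  have : mu < 2 * u by rewrite ltNge; apply/negP => hh; nra.
  nra.
have : 1 <= k * (nu - mu + X) ^+ 2.
  have -> : nu - mu + X = nu + X - mu by ring.
  nra.
lra.
Qed.

Lemma pz_ind c nu t E4 :
  let W0 := (nu + p * Sc c) ^+ 2 + Vc c in
  0 < W0 -> t ^+ 2 * 1024 <= W0 ->
  Ex (size c) (fun s => (nu + Xv c s) ^+ 4) <= E4 ->
  E4 <= 49 / 16 * W0 ^+ 2 ->
  8 / 25 <= Ex (size c) (fun s => ind (t ^+ 2 <= (nu + Xv c s) ^+ 2)).
Proof.
move=> W0 hW ht h4 hE.
set L : R := 1023 / 1024 * (16 / 49).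
set lam := L / W0.
have hlW : lam * W0 = L by rewrite /lam mulrAC -mulrA divff ?mulr1 // gt_eqF.
have hl0 : 0 <= lam by rewrite /lam divr_ge0 // ?ltW // /L; lra.
have step : Ex (size c) (fun s => 2 * lam * ((nu + Xv c s) ^+ 2 - t ^+ 2) - lam ^+ 2 * (nu + Xv c s) ^+ 4)
     <= Ex (size c) (fun s => ind (t ^+ 2 <= (nu + Xv c s) ^+ 2)).
  apply: Ex_le => s; set Z := (nu + Xv c s) ^+ 2.
  have -> : (nu + Xv c s) ^+ 4 = Z ^+ 2 by rewrite /Z -exprM.
  rewrite /ind; case: ifP => h.
    have : 0 <= (1 - lam * Z) ^+ 2 by exact: sqr_ge0.
    have : 0 <= lam * t ^+ 2 by rewrite mulr_ge0 // sqr_ge0.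
    nra.
  move/negbT: h; rewrite -ltNge => h.
  have : 0 <= lam ^+ 2 * Z ^+ 2 by rewrite mulr_ge0 // sqr_ge0.
  nra.
apply: le_trans step.
have -> : Ex (size c) (fun s => 2 * lam * ((nu + Xv c s) ^+ 2 - t ^+ 2) - lam ^+ 2 * (nu + Xv c s) ^+ 4)
   = - (2 * lam * t ^+ 2) + (2 * lam) * Ex (size c) (fun s => (nu + Xv c s) ^+ 2)
     + (- lam ^+ 2) * Ex (size c) (fun s => (nu + Xv c s) ^+ 4).
  rewrite (Ex_ext _ _ (fun s => (- (2 * lam * t ^+ 2) + (2 * lam) * (nu + Xv c s) ^+ 2) + (- lam ^+ 2) * (nu + Xv c s) ^+ 4)); last by move=> s; ring.
  by rewrite Ex_add Ex_affine Ex_scale.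
rewrite Ex_M2 -/W0.
have h1 : lam * t ^+ 2 * 1024 <= L by rewrite -hlW -mulrA ler_wpM2l.
have h2 : lam ^+ 2 * Ex (size c) (fun s => (nu + Xv c s) ^+ 4) <= 49 / 16 * L ^+ 2.
  rewrite -hlW; apply: le_trans (_ : lam ^+ 2 * (49 / 16 * W0 ^+ 2) <= _); last by rewrite le_eqVlt; apply/orP; left; apply/eqP; ring.
  by apply: ler_wpM2l; [rewrite sqr_ge0 | apply: le_trans hE].
rewrite /L in h1 h2 hlW *.
nra.
Qed.


Definition Wc (c : seq R) := \sum_(x <- c) vv * x ^+ 4.

Lemma vv_ge0 : 0 <= vv.
Proof. by rewrite /vv mulr_ge0 // subr_ge0. Qed.

Lemma M4_bound c nu :
  Ex (size c) (fun s => (nu + Xv c s) ^+ 4) <=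
  (nu + p * Sc c) ^+ 4 + 13 / 2 * (nu + p * Sc c) ^+ 2 * Vc c + 3 * Vc c ^+ 2 + 9 * Wc c.
Proof.
rewrite Ex_M4; set mu := nu + p * Sc c.
have hv := vv_ge0.
have h1 : 4 * mu * K3 c <= 1 / 2 * mu ^+ 2 * Vc c + 8 * Wc c.
  rewrite /K3 /Vc /Wc !mulr_sumr -big_split /=; apply: ler_sum => x _.
  have -> : m3 = vv * (1 - 2 * p) by rewrite /m3 /vv; ring.
  set q := 1 - 2 * p.
  have hpp : 0 <= p * (1 - p) by rewrite mulr_ge0 // subr_ge0.
  have hq : q ^+ 2 <= 1 by rewrite /q; lra.
  have e1 : 0 <= x ^+ 2 / 2 * (q * mu - 4 * x) ^+ 2 by rewrite mulr_ge0 ?sqr_ge0 // divr_ge0 // sqr_ge0.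
  have e2 : (q * mu) ^+ 2 * x ^+ 2 <= mu ^+ 2 * x ^+ 2.
    have : 0 <= (1 - q ^+ 2) * (mu ^+ 2 * x ^+ 2) by rewrite mulr_ge0 ?subr_ge0 // mulr_ge0 // sqr_ge0.
    lra.
  have : 4 * (q * mu) * x ^+ 3 <= mu ^+ 2 * x ^+ 2 / 2 + 8 * x ^+ 4 by nra.
  move=> e3.
  have := ler_wpM2l hv e3.
  move=> e4; nra.
have h2 : Q4 c <= Wc c.
  rewrite /Q4 /Wc; apply: ler_sum => x _; apply: ler_wpM2r; first by rewrite (_ : x ^+ 4 = (x ^+ 2) ^+ 2) ?sqr_ge0 // -exprM.
  have -> : m4 = vv - 3 * vv ^+ 2 by rewrite /m4 /vv; ring.
  have : 0 <= vv ^+ 2 by exact: sqr_ge0.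
  lra.
lra.
Qed.


Lemma sqlt (x y : R) : 0 <= y -> x ^+ 2 < y ^+ 2 -> - y < x /\ x < y.
Proof.
move=> hy h; split.
  by rewrite ltNge; apply/negP => hh; nra.
by rewrite ltNge; apply/negP => hh; nra.
Qed.

Lemma big_mean (a SB S : R) : 0 < p -> 0 < a -> a ^+ 2 <= (SB + S) ^+ 2 ->
  p ^+ 2 * a ^+ 2 <= 16 * (0 + p * S) ^+ 2 \/ p ^+ 2 * a ^+ 2 <= 16 * (SB + p * S) ^+ 2.
Proof.
move=> hp ha hS.
have [h1|h1] := lerP (p ^+ 2 * a ^+ 2) (16 * (0 + p * S) ^+ 2); first by left.
have [h2|h2] := lerP (p ^+ 2 * a ^+ 2) (16 * (SB + p * S) ^+ 2); first by right.
exfalso.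
have hA : 0 <= p * a by rewrite mulr_ge0 // ltW.
have [b1 b2] : - (p * a) < 4 * (p * S) /\ 4 * (p * S) < p * a.
  by apply: sqlt => //; rewrite add0r in h1; rewrite !exprMn; lra.
have [b3 b4] : - (p * a) < 4 * (SB + p * S) /\ 4 * (SB + p * S) < p * a.
  by apply: sqlt => //; rewrite !exprMn; lra.
have c1 : S < a / 4 by nra.
have c2 : - (a / 4) < S by nra.
have pa : p * a <= a by have := ler_wpM2r (ltW ha) p1; rewrite mul1r.
have : - (3 * a / 4) < SB + S /\ SB + S < 3 * a / 4 by split; lra.
case=> d1 d2.
have : (SB + S) ^+ 2 < (3 * a / 4) ^+ 2 by nra.
nra.
Qed.

Lemma W_bound (d a : R) (c : seq R) :
  (forall x, x \in c -> x ^+ 2 * 2 ^+ 28 <= 2 * d ^+ 3 * a ^+ 2) ->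
  Wc c * 2 ^+ 28 <= (2 * d ^+ 3 * a ^+ 2) * Vc c.
Proof.
move=> hx; rewrite /Wc /Vc mulr_suml mulr_sumr !big_seq; apply: ler_sum => x xc.
have := hx x xc => h.
have hv := vv_ge0.
have e : x ^+ 4 = x ^+ 2 * x ^+ 2 by rewrite -exprD.
rewrite e.
have : 0 <= x ^+ 2 by exact: sqr_ge0.
move=> h0.
have := ler_wpM2l h0 h => h'.
have := ler_wpM2l hv h' => h''.
lra.
Qed.

Lemma one_case (d a t : R) (c : seq R) nub nuo :
  p = d / 32 -> 0 < d -> d <= 1 -> 0 < a ->
  (forall x, x \in c -> x ^+ 2 * 2 ^+ 28 <= 2 * d ^+ 3 * a ^+ 2) ->
  t ^+ 2 * 2 ^+ 28 <= d ^+ 4 * a ^+ 2 ->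
  p ^+ 2 * a ^+ 2 <= 16 * (nub + p * Sc c) ^+ 2 ->
  16 / 25 <= Ex (size c) (fun s => ind (t ^+ 2 <= (nub + Xv c s) ^+ 2))
            + Ex (size c) (fun s => ind (t ^+ 2 <= (nuo + Xv c s) ^+ 2)).
Proof.
move=> hp hd hd1 ha hx ht hmu.
have hW := W_bound _ _ _ hx.
set V := Vc c in hW *; set W := Wc c in hW *.
have hV0 : 0 <= V by rewrite /V /Vc big_seq sumr_ge0 // => x _; rewrite mulr_ge0 ?vv_ge0 ?sqr_ge0.
have hda : 0 < d ^+ 2 * a ^+ 2 by rewrite mulr_gt0 // exprn_gt0.
have hd2 : d ^+ 2 <= 1 by rewrite expr2; nra.
have hd4 : d ^+ 4 * a ^+ 2 <= d ^+ 2 * a ^+ 2.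
  have -> : d ^+ 4 * a ^+ 2 = d ^+ 2 * (d ^+ 2 * a ^+ 2) by ring.
  by have := ler_wpM2r (ltW hda) hd2; rewrite mul1r.
have hd3 : d ^+ 3 * a ^+ 2 <= d ^+ 2 * a ^+ 2.
  have -> : d ^+ 3 * a ^+ 2 = d * (d ^+ 2 * a ^+ 2) by ring.
  by have := ler_wpM2r (ltW hda) hd1; rewrite mul1r.
have e : p ^+ 2 * a ^+ 2 = (d ^+ 2 * a ^+ 2) / 1024 by rewrite hp; field.
rewrite e in hmu; clear e.
have [hc|hc] := lerP (V * 16) ((nub + p * Sc c) ^+ 2).
  set mu2 := (nub + p * Sc c) ^+ 2 in hc hmu *.
  have hmu0 : 0 < mu2 by lra.
  have h1 := cheb_ind c nub t.
  have : t ^+ 2 * 4 <= mu2 by lra.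
  move/h1 => /(_ hmu0) h2.
  have h3 : 4 / mu2 * V <= 1 / 4 by rewrite mulrAC ler_pdivrMr //; lra.
  have h4 := Ex_ge0ind (size c) (fun s => t ^+ 2 <= (nuo + Xv c s) ^+ 2).
  rewrite /= in h4; rewrite -/V -/mu2 in h2; lra.
have hVp : d ^+ 2 * a ^+ 2 < 2 ^+ 18 * V by lra.
have hW2 : W * 512 <= V ^+ 2.
  have : (d ^+ 2 * a ^+ 2) * V <= (2 ^+ 18 * V) * V by rewrite ler_wpM2r // ltW.
  have : (d ^+ 3 * a ^+ 2) * V <= (d ^+ 2 * a ^+ 2) * V by rewrite ler_wpM2r.
  move=> q1 q2. nra.
suff gen : forall nu, 8 / 25 <= Ex (size c) (fun s => ind (t ^+ 2 <= (nu + Xv c s) ^+ 2)).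
  have := gen nub; have := gen nuo; lra.
move=> nu.
apply: (pz_ind c nu t ((nu + p * Sc c) ^+ 4 + 13 / 2 * (nu + p * Sc c) ^+ 2 * Vc c + 3 * Vc c ^+ 2 + 9 * Wc c)).
- have : 0 <= (nu + p * Sc c) ^+ 2 by exact: sqr_ge0.
  rewrite -/V; lra.
- have : 0 <= (nu + p * Sc c) ^+ 2 by exact: sqr_ge0.
  rewrite -/V; lra.
- exact: M4_bound.
- rewrite -/V -/W; set u := (nu + p * Sc c) ^+ 2.
  have -> : (nu + p * Sc c) ^+ 4 = u ^+ 2 by rewrite /u -exprM.
  have : 0 <= (u - V / 8) ^+ 2 by exact: sqr_ge0.
  have : 0 <= u ^+ 2 by exact: sqr_ge0.
  nra.
Qed.

Lemma row_good (d a SB t : R) (c : seq R) :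
  p = d / 32 -> 0 < d -> d <= 1 -> 0 < a ->
  (forall x, x \in c -> x ^+ 2 * 2 ^+ 28 <= 2 * d ^+ 3 * a ^+ 2) ->
  a ^+ 2 <= (SB + Sc c) ^+ 2 ->
  t ^+ 2 * 2 ^+ 28 <= d ^+ 4 * a ^+ 2 ->
  16 / 25 <= Ex (size c) (fun s => ind (t ^+ 2 <= (Xv c s) ^+ 2))
            + Ex (size c) (fun s => ind (t ^+ 2 <= (SB + Xv c s) ^+ 2)).
Proof.
move=> hp hd hd1 ha hx hS ht.
have hp0 : 0 < p by rewrite hp; lra.
rewrite (Ex_ext _ _ (fun s => ind (t ^+ 2 <= (0 + Xv c s) ^+ 2))); last by move=> s; rewrite add0r.
have [h|h] := big_mean _ _ _ hp0 ha hS.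
  exact: (one_case _ _ _ _ _ _ hp hd hd1 ha hx ht h).
rewrite addrC; exact: (one_case _ _ _ _ _ _ hp hd hd1 ha hx ht h).
Qed.

End Prob.
Arguments Xv {R}.
Arguments Sc {R}.
Arguments ind {R}.
Arguments Ex {R}.
Arguments Vc {R}.

Lemma Xv_big (R : realType) (c : seq R) s :
  Xv c s = \sum_(i < size c) (if nth false s i then nth 0 c i else 0).
Proof.
elim: c s => [|x c IH] [|b s] /=; rewrite ?big_ord0 //.
  by rewrite big1 // => i _; rewrite nth_nil.
rewrite big_ord_recl /= IH; congr (_ + _); try by apply: eq_bigr => i _; rewrite lift0.
Qed.

Lemma count_ind (R : realType) (T : Type) (P : pred T) (r : seq T) :
  ((count P r)%:R : R) = \sum_(i <- r) ind (P i).
Proof.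
elim: r => [|x r IH]; first by rewrite big_nil.
rewrite big_cons /= natrD IH; congr (_ + _); by case: (P x).
Qed.

Lemma card_ind (R : realType) (k : nat) (A : {set 'I_k}) :
  ((#|A|)%:R : R) = \sum_(j < k) ind (j \in A).
Proof.
rewrite -sum1_card natr_sum big_mkcond /=; apply: eq_bigr => j _.
by rewrite /ind; case: (j \in A).
Qed.

Lemma sum_map_enum (R : realType) (k : nat) (F : 'I_k -> R) :
  \sum_(x <- [seq F j | j <- enum 'I_k]) x = \sum_(j < k) F j.
Proof. by rewrite big_map big_enum. Qed.

Lemma nth_map_enum (R : realType) (k : nat) (F : 'I_k -> R) (i : 'I_k) :
  nth 0 [seq F j | j <- enum 'I_k] i = F i.
Proof.
rewrite (nth_map i) ?size_enum_ord //; congr F; apply: val_inj => /=.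
by rewrite nth_enum_ord.
Qed.

Lemma Xv_map (R : realType) (k : nat) (F : 'I_k -> R) s :
  Xv [seq F j | j <- enum 'I_k] s = \sum_(j < k) (if nth false s j then F j else 0).
Proof.
rewrite Xv_big size_map size_enum_ord; apply: eq_bigr => j _.
by rewrite nth_map_enum.
Qed.

Lemma min_coord_le (R : realDomainType) m (v : 'cV[R]_m) l : min_coord v <= v l 0.
Proof.
rewrite /min_coord; set s := [seq v l0 0 | l0 <- enum 'I_m].
have : v l 0 \in s by apply: map_f; rewrite mem_enum.
elim: s (head 0 s) => [|x s IH] h //=.
rewrite inE => /orP [/eqP ->|hs]; first by rewrite ge_min lexx.
by rewrite ge_min (IH h hs) orbT.
Qed.

Lemma max_entry_le (R : realDomainType) m k (T : 'M[R]_(m, k)) i j :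
  `|T i j| <= max_abs_entry T.
Proof.
rewrite /max_abs_entry.
apply: le_trans (le_bigmax _ _ i).
exact: (le_bigmax _ (fun j => `|T i j|) j).
Qed.

Lemma max_entry_ge0 (R : realDomainType) m k (T : 'M[R]_(m, k)) : 0 <= max_abs_entry T.
Proof.
rewrite /max_abs_entry.
apply: (big_ind (fun x : R => 0 <= x)) => //; try (by move=> x y hx hy; rewrite le_max hx); move=> i _.
apply: (big_ind (fun x : R => 0 <= x)) => //; try (by move=> x y hx hy; rewrite le_max hx); move=> j _.
Qed.

Lemma sorted_nth_ge (R : realDomainType) (s : seq R) (t : R) r :
  sorted (fun a b => b <= a) s -> (0 < r)%N -> (r <= count (fun x => (t <= x)%R) s)%N ->
  t <= nth 0 s r.-1.
Proof.
elim: s r => [|x s IH] r //=; first by move=> _ hr; rewrite leqNgt hr.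
move=> hs hr hc.
case: r hr hc => [|[|r]] // _ hc /=.
  have : has (fun x => t <= x) (x :: s) by rewrite has_count /= (leq_trans _ hc).
  move/hasP => [y]; rewrite inE => /orP [/eqP -> //|ys hy].
  have := order_path_min (fun y x z (h1 : y <= x) (h2 : z <= y) => le_trans h2 h1) hs.
  move/allP => /(_ y ys) hyx; exact: le_trans hy hyx.
apply: (IH r.+1) => //; first exact: path_sorted hs.
move: hc; rewrite addnC; case: (t <= x) => /=; rewrite ?addn0 ?addn1 // => h; exact: ltnW.
Qed.

Lemma kth_max_ge (R : realDomainType) m r (v : 'cV[R]_m) t :
  (0 < r)%N -> (r <= count (fun l => (t <= v l 0)%R) (enum 'I_m))%N -> t <= kth_max r v.
Proof.
move=> hr hc; rewrite /kth_max; apply: sorted_nth_ge => //.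
  by apply: sort_sorted => a b; exact: le_total.
have hp : perm_eq (sort (fun a b : R => b <= a) [seq v l 0 | l <- enum 'I_m]) [seq v l 0 | l <- enum 'I_m].
  by rewrite perm_sort perm_refl.
by rewrite (permP hp) count_map.
Qed.

Lemma sq_le_abs (R : realDomainType) (t u : R) : 0 <= t -> t ^+ 2 <= u ^+ 2 -> t <= `|u|.
Proof.
move=> ht h; rewrite -(real_normK (num_real u)) in h.
have hu := normr_ge0 u.
by rewrite leNgt; apply/negP => hh; nra.
Qed.

Lemma abs_le_sq (R : realDomainType) (u M : R) : `|u| <= M -> u ^+ 2 <= M ^+ 2.
Proof.
move=> h; rewrite -(real_normK (num_real u)).
have hu := normr_ge0 u; nra.
Qed.

Lemma Sc_nseq (R : realType) k : Sc (nseq k (1 : R)) = k%:R.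
Proof.
elim: k => [|k IH]; first by rewrite /Sc big_nil.
by rewrite /Sc /= big_cons -/(Sc _) IH mulrS.
Qed.

Lemma Vc_nseq (R : realType) (p : R) k : 0 <= p -> p <= 1 -> Vc p (nseq k (1 : R)) <= p * k%:R.
Proof.
move=> p0 p1; elim: k => [|k IH]; first by rewrite /Vc big_nil mulr0.
rewrite /Vc /= big_cons -/(Vc _ _) mulrS /vv expr1n mulr1.
have h0 : 0 <= p * p by rewrite mulr_ge0.
have h : p * (1 - p) <= p by rewrite mulrBr mulr1; lra.
rewrite mulrDr mulr1; lra.
Qed.

Theorem lemma4p1 (R : realType) :
  exists C : R, 0 < C /\
  forall (delta : R) (k m : nat) (T : 'M[R]_(m, k)) (y : 'cV[R]_k),
    0 < delta -> delta <= 1 ->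
    12 / delta ^+ 2 <= k%:R ->
    (4 <= m)%N ->
    on_sphere y ->
    exists J : {set 'I_k},
      (#|J|%:R <= delta * k%:R) /\
      C^-1 * delta ^+ 2 * min_coord (absv (T *m y))
        <= max_abs_entry T / Num.sqrt (k%:R)
           + kth_max (m %/ 4) (absv (T *m coordproj J y)).
Proof.
exists (2 ^+ 14); split; first by rewrite exprn_gt0.
move=> d k m T y hd hd1 hk hm hy.
set a := min_coord (absv (T *m y)).
set M := max_abs_entry T.
set sk := Num.sqrt k%:R.
set r := (m %/ 4)%N.
set t := (2 ^+ 14)^-1 * d ^+ 2 * a.
have hr : (0 < r)%N by rewrite divn_gt0.
have hr4 : (r * 4 <= m)%N by rewrite leq_trunc_div.
have hk0 : 0 < (k%:R : R).
  have h : 0 < 12 / d ^+ 2 by rewrite divr_gt0 // exprn_gt0.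
  exact: lt_le_trans h hk.
have hsk : 0 < sk by rewrite sqrtr_gt0.
have hM0 : 0 <= M := max_entry_ge0 _ _ _ T.
have hMs : 0 <= M / sk by rewrite divr_ge0 // ltW.
have kth0 : forall J, 0 <= kth_max r (absv (T *m coordproj J y)).
  move=> J; apply: kth_max_ge => //.
  rewrite (@eq_count _ _ predT) ?count_predT ?size_enum_ord; last first.
    by move=> l; rewrite /absv mxE normr_ge0.
  apply: leq_trans hr4; exact: leq_pmulr.
have [htriv|hmain] := lerP t (M / sk).
  exists set0; split; first by rewrite cards0 /= mulr_ge0 // ltW.
  have := kth0 set0; rewrite -/t; lra.

have ht0 : 0 < t by apply: le_lt_trans hMs hmain.
have ha : 0 < a.
  move: ht0; rewrite /t pmulr_rgt0 //.
  by rewrite mulr_gt0 // ?invr_gt0 ?exprn_gt0.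
have et : t ^+ 2 * 2 ^+ 28 = d ^+ 4 * a ^+ 2 by rewrite /t; field.
have hMk : M ^+ 2 * 2 ^+ 28 <= d ^+ 4 * a ^+ 2 * k%:R.
  have h1 : M < t * sk by rewrite -ltr_pdivrMr.
  have h2 : sk ^+ 2 = k%:R by rewrite /sk sqr_sqrtr // ltW.
  have h3 : M ^+ 2 <= (t * sk) ^+ 2 by apply: abs_le_sq; rewrite ger0_norm // ltW.
  rewrite exprMn h2 in h3.
  have h4 := ler_wpM2r (exprn_ge0 28 (ler0n R 2)) h3.
  have h5 : t ^+ 2 * k%:R * 2 ^+ 28 = d ^+ 4 * a ^+ 2 * k%:R by rewrite -et; ring.
  by rewrite -h5.

set X := d * k%:R.
have hX : 12 <= X.
  have h1 : 12 <= d ^+ 2 * k%:R by rewrite -ler_pdivrMl ?exprn_gt0 // mulrC.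
  have h2 : d ^+ 2 * k%:R <= X by rewrite /X expr2 -mulrA ger_pMl ?mulr_gt0 //; nra.
  lra.
set B := [set j : 'I_k | 2 <= y j 0 ^+ 2 * X].
have hB : (#|B|)%:R * 2 <= X.
  rewrite card_ind mulr_suml.
  apply: le_trans (_ : \sum_(j < k) y j 0 ^+ 2 * X <= _).
    apply: ler_sum => j _; rewrite /ind inE; case: ifP => h; first by rewrite mul1r.
    by rewrite mul0r mulr_ge0 ?sqr_ge0 // ltW //; lra.
  by rewrite -mulr_suml hy mul1r.
set F := fun (l : 'I_m) (j : 'I_k) => if j \in B then 0 else T l j * y j 0.
set c := fun l => [seq F l j | j <- enum 'I_k].
set SB := fun l => \sum_(j < k) (if j \in B then T l j * y j 0 else 0).
set p := d / 32.
have hp0 : 0 <= p by rewrite /p divr_ge0 // ltW.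
have hp1 : p <= 1 by rewrite /p; lra.
have hsize : forall l, size (c l) = k by move=> l; rewrite size_map size_enum_ord.
have hrow : forall l, 16 / 25 <= Ex p k (fun s => ind (t ^+ 2 <= (Xv (c l) s) ^+ 2))
                      + Ex p k (fun s => ind (t ^+ 2 <= (SB l + Xv (c l) s) ^+ 2)).
  move=> l.
  have H1 : forall x, x \in c l -> x ^+ 2 * 2 ^+ 28 <= 2 * d ^+ 3 * a ^+ 2.
    move=> x /mapP [j _ ->]; rewrite /F; case: ifP => hj.
      by rewrite expr0n /= mul0r mulr_ge0 // ?mulr_ge0 ?exprn_ge0 // ltW.
    have hyj : y j 0 ^+ 2 * X < 2 by move/negbT: hj; rewrite inE -ltNge.
    have hT : T l j ^+ 2 <= M ^+ 2 by apply: abs_le_sq; exact: max_entry_le.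
    have hy0 : 0 <= y j 0 ^+ 2 by exact: sqr_ge0.
    have e1 : (T l j * y j 0) ^+ 2 * 2 ^+ 28 <= M ^+ 2 * 2 ^+ 28 * y j 0 ^+ 2.
      rewrite exprMn; have := ler_wpM2r hy0 hT; nra.
    apply: le_trans e1 _.
    have e2 := ler_wpM2r hy0 hMk.
    apply: le_trans e2 _.
    have hda : 0 <= d ^+ 3 * a ^+ 2 by rewrite mulr_ge0 ?exprn_ge0 // ltW.
    have e3 := ler_wpM2l hda (ltW hyj).
    have -> : d ^+ 4 * a ^+ 2 * k%:R * y j 0 ^+ 2 = d ^+ 3 * a ^+ 2 * (y j 0 ^+ 2 * X) by rewrite /X; ring.
    by apply: le_trans e3 _; rewrite le_eqVlt; apply/orP; left; apply/eqP; ring.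
  have H2 : a ^+ 2 <= (SB l + Sc (c l)) ^+ 2.
  have e : SB l + Sc (c l) = (T *m y) l 0.
    rewrite /Sc /c /= sum_map_enum /SB /= -big_split mxE; apply: eq_bigr => j _.
    by rewrite /F /=; case: (j \in B); rewrite ?addr0 ?add0r.
  rewrite e; have := min_coord_le _ _ (absv (T *m y)) l; rewrite /absv mxE -/a => h.
  rewrite -(real_normK (num_real ((T *m y) l 0))); have := ltW ha; nra.
  have H3 : t ^+ 2 * 2 ^+ 28 <= d ^+ 4 * a ^+ 2 by rewrite et.
  have := row_good _ _ hp0 hp1 d a (SB l) t (c l) erefl hd hd1 ha H1 H2 H3.
  by rewrite hsize.

set ones := nseq k (1 : R).
have hN : forall s, Xv ones s = \sum_(j < k) ind (nth false s j).
  move=> s; rewrite Xv_big size_nseq; apply: eq_bigr => j _.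
  by rewrite nth_nseq ltn_ord /ind; case: (nth false s j).
have hpk : p * k%:R = X / 32 by rewrite /p /X; field.
have hfail : Ex p k (fun s => 1 - ind (Xv ones s <= X / 2)) <= 3 / 250.
  set kap := (32 / (15 * X)) ^+ 2.
  have hX0 : X != 0 by apply/eqP => h; rewrite h in hX; lra.
  have hk1 : kap * (15 * X / 32) ^+ 2 = 1 by rewrite /kap; field.
  have hka : 0 <= kap by exact: sqr_ge0.
  apply: le_trans (_ : Ex p k (fun s => 0 + kap * ((- (p * k%:R)) + Xv ones s) ^+ 2) <= _).
    apply: (Ex_le _ _ hp0 hp1) => s; rewrite /ind; case: ifP => h.
      by rewrite subrr add0r mulr_ge0 // sqr_ge0.
    move/negbT: h; rewrite -ltNge => h.
    rewrite hpk.
    have h1 : 15 * X / 32 < - (X / 32) + Xv ones s by lra.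
    have h2 : (15 * X / 32) ^+ 2 <= (- (X / 32) + Xv ones s) ^+ 2.
      apply: abs_le_sq; rewrite ger0_norm; last by lra.
      exact: ltW.
    have := ler_wpM2l hka h2; lra.
  have h := Ex_M2 _ p ones (- (p * k%:R)).
  rewrite size_nseq Sc_nseq in h.
  rewrite Ex_affine h add0r.
  have -> : (- (p * k%:R) + p * k%:R) ^+ 2 = 0 by rewrite addNr expr0n.
  rewrite add0r.
  have hV := Vc_nseq _ _ k hp0 hp1.
  apply: le_trans (ler_wpM2l hka hV) _.
  rewrite hpk.
  have e : kap * X * X = (32 / 15) ^+ 2 by rewrite /kap; field.
  have hkX : 0 <= kap * X by rewrite mulr_ge0 //; lra.
  have : kap * X * 12 <= kap * X * X by rewrite ler_wpM2l.
  lra.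

pose ok := fun s => Xv ones s <= X / 2.
pose g1 := fun (l : 'I_m) s => t ^+ 2 <= (Xv (c l) s) ^+ 2.
pose g2 := fun (l : 'I_m) s => t ^+ 2 <= (SB l + Xv (c l) s) ^+ 2.
pose Phi := (fun s => \sum_(l <- enum 'I_m) ind (ok s) * (ind (g1 l s) + ind (g2 l s))) : seq bool -> R.
have hPhi : m%:R / 2 <= Ex p k Phi.
  rewrite /Phi Ex_sum.
  apply: le_trans (_ : \sum_(l <- enum 'I_m) (1 / 2 : R) <= _).
    rewrite big_enum /= sumr_const card_ord -mulr_natr.
    by rewrite le_eqVlt; apply/orP; left; apply/eqP; ring.
  apply: ler_sum => l _.
  apply: le_trans (_ : Ex p k (fun s => (ind (g1 l s) + ind (g2 l s)) + (-2) * (1 - ind (ok s))) <= _).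
    rewrite Ex_add Ex_scale Ex_add; have := hrow l; have := hfail; rewrite /g1 /g2 /ok; lra.
  apply: (Ex_le _ _ hp0 hp1) => s.
  have := ind_ge0 R (g1 l s); have := ind_le1 R (g1 l s).
  have := ind_ge0 R (g2 l s); have := ind_le1 R (g2 l s).
  rewrite /ind; case: (ok s); lra.
have hm2 : 2 * r%:R - 2 < (m%:R : R) / 2.
  have : (r%:R : R) * 4 <= m%:R by rewrite -natrM ler_nat.
  lra.
have [s hs] := Ex_exists _ _ hp0 hp1 _ _ _ (lt_le_trans hm2 hPhi).
have hr1 : (1 : R) <= r%:R by rewrite ler1n.
case hok : (ok s); last first.
  exfalso; move: hs; rewrite /Phi hok /ind big1 => [|l _]; last by rewrite mul0r.
  lra.
move: hs; rewrite /Phi hok /ind.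
under eq_bigr do rewrite mul1r.
rewrite big_split /=.
rewrite -(count_ind _ _ (fun l => g1 l s)) -(count_ind _ _ (fun l => g2 l s)).
set n1 := count _ _; set n2 := count _ _ => hs.
have hn : (r + r < n1 + n2 + 2)%N.
  by rewrite -(ltr_nat R) !natrD; lra.
set J1 := [set j : 'I_k | nth false s j && (j \notin B)].
have hJ1 : (#|J1|)%:R <= X / 2.
  apply: le_trans (_ : Xv ones s <= _) => //.
  rewrite card_ind hN; apply: ler_sum => j _; rewrite /ind /J1 in_set.
  by case: (nth false s j); case: (j \in B) => //=; rewrite ler01.
have e1 : forall l, (T *m coordproj J1 y) l 0 = Xv (c l) s.
  move=> l; rewrite mxE Xv_map; apply: eq_bigr => j _.
  rewrite /coordproj mxE /F /=.
  case hj : (j \in B); case hsj : (nth false s j); rewrite /J1 in_set hsj hj /=;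
    by rewrite ?mulr0 ?addr0 ?add0r.
have e2 : forall l, (T *m coordproj (B :|: J1) y) l 0 = SB l + Xv (c l) s.
  move=> l; rewrite mxE Xv_map /SB /= -big_split; apply: eq_bigr => j _.
  rewrite /coordproj mxE in_setU /F /=.
  case hj : (j \in B); case hsj : (nth false s j); rewrite /J1 in_set hsj hj /=;
    by rewrite ?mulr0 ?addr0 ?add0r.
have finish : forall (J : {set 'I_k}) (P : pred 'I_m), (#|J|%:R <= X) ->
    (r <= count P (enum 'I_m))%N ->
    (forall l, P l -> t <= `|(T *m coordproj J y) l 0|) ->
    exists J : {set 'I_k}, (#|J|%:R <= X) /\
      t <= M / sk + kth_max r (absv (T *m coordproj J y)).
  move=> J P hJ hc hP; exists J; split => //.
  suff : t <= kth_max r (absv (T *m coordproj J y)) by lra.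
  apply: kth_max_ge => //; apply: leq_trans hc _.
  by apply: sub_count => l /hP h; rewrite /absv mxE.
have [hn1|hn1] := leqP r n1.
  apply: (finish J1 (fun l => g1 l s)) => //; first by lra.
  move=> l; rewrite /g1 e1; apply: sq_le_abs; exact: ltW.
apply: (finish (B :|: J1) (fun l => g2 l s)).
- apply: le_trans (_ : (#|B| + #|J1|)%:R <= _).
    by rewrite ler_nat cardsU leq_subr.
  rewrite natrD; lra.
- rewrite -/n2; move: hn hn1; clear; move=> hn hn1; lia.
- move=> l; rewrite /g2 e2; apply: sq_le_abs; exact: ltW.
Qed.
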